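(* Let $f(t)\in\mathbb{Q}[t]$ be irreducible of degree $3$. Then there are infinitely many quadratic polynomials $g(y)\in\mathbb{Q}[y]$ for which $f(g(y))$ is reducible in $\mathbb{Q}[y]$, and which are pairwise distinct under transformations replacing $y$ by a polynomial in $y$ (that is, no one of them is obtained from another by substituting a polynomial $p(y)\in\mathbb{Q}[y]$ for $y$). *)

(* Defs.v *)
From HB Require Import structures.
From mathcomp Require Export all_boot all_order all_algebra.
Set Implicit Arguments. Unset Strict Implicit. Unset Printing Implicit Defensive.
Import GRing.Theory.
Local Open Scope ring_scope.

Definition reducible_poly (R : idomainType) (p : {poly R}) : Prop :=
  (1 < size p)%N /\ ~ irreducible_poly p.

(* Main.v *)
Require Import Defs.
From mathcomp Require Import all_boot all_order all_algebra.
From mathcomp Require Import ring zify.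
Set Implicit Arguments. Unset Strict Implicit. Unset Printing Implicit Defensive.
Import GRing.Theory Num.Theory.
Local Open Scope ring_scope.

Section Gen.
Variable R : comNzRingType.
Definition Ae (p0 p1 p2 x : R) := (x^+2 - p1)^+2 - 8 * p0 * x - 4 * p0 * p2.
Definition Be (p0 p1 p2 x : R) := -4 * (x^+3 + p2 * x^+2 + p1 * x + p0).
Definition e1 (p0 p1 p2 x : R) := -3 * x^+2 - 2 * p2 * x - p1.
Definition e2 (p0 p1 p2 x : R) := 3 * x^+4 + 4 * p2 * x^+3 + 6 * p1 * x^+2 - p1^+2 + 12 * p0 * x + 4 * p0 * p2.
Definition e3 (p0 p1 p2 x : R) := - x^+6 - 2 * p2 * x^+5 - 5 * p1 * x^+4 + 5 * p1^+2 * x^+2 + 2 * p1^+2 * p2 * x + p1^+3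
  - 20 * p0 * x^+3 - 20 * p0 * p2 * x^+2 - 8 * p0 * p2^+2 * x + 4 * p0 * p1 * x - 4 * p0 * p1 * p2 + 8 * p0^+2.
Lemma key (p0 p1 p2 x z : R) : let h := z^+2 - Ae p0 p1 p2 x in
  let B := Be p0 p1 p2 x in
  h^+3 + p2 * B * h^+2 + p1 * B^+2 * h + p0 * B^+3 =
  (z^+3 - e1 p0 p1 p2 x * z^+2 + e2 p0 p1 p2 x * z - e3 p0 p1 p2 x)
  * (z^+3 + e1 p0 p1 p2 x * z^+2 + e2 p0 p1 p2 x * z + e3 p0 p1 p2 x).
Proof. rewrite /Ae /Be /e1 /e2 /e3 /=. ring. Qed.
End Gen.

Section Morph.
Variables (R S : comNzRingType) (phi : {rmorphism R -> S}) (p0 p1 p2 x : R).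
Lemma Ae_m : phi (Ae p0 p1 p2 x) = Ae (phi p0) (phi p1) (phi p2) (phi x).
Proof. by rewrite /Ae !(rmorph_nat, rmorphXn, rmorphB, rmorphD, rmorphN, rmorphM). Qed.
Lemma Be_m : phi (Be p0 p1 p2 x) = Be (phi p0) (phi p1) (phi p2) (phi x).
Proof. by rewrite /Be !(rmorph_nat, rmorphXn, rmorphB, rmorphD, rmorphN, rmorphM). Qed.
Lemma e1_m : phi (e1 p0 p1 p2 x) = e1 (phi p0) (phi p1) (phi p2) (phi x).
Proof. by rewrite /e1 !(rmorph_nat, rmorphXn, rmorphB, rmorphD, rmorphN, rmorphM). Qed.
Lemma e2_m : phi (e2 p0 p1 p2 x) = e2 (phi p0) (phi p1) (phi p2) (phi x).
Proof. by rewrite /e2 !(rmorph_nat, rmorphXn, rmorphB, rmorphD, rmorphN, rmorphM). Qed.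
Lemma e3_m : phi (e3 p0 p1 p2 x) = e3 (phi p0) (phi p1) (phi p2) (phi x).
Proof. by rewrite /e3 !(rmorph_nat, rmorphXn, rmorphB, rmorphD, rmorphN, rmorphM). Qed.
End Morph.

Lemma coef_quad (c2 c1 c0 : rat) :
  (c2%:P * 'X^2 + c1%:P * 'X + c0%:P)`_0 = c0 /\
  (c2%:P * 'X^2 + c1%:P * 'X + c0%:P)`_1 = c1.
Proof. by rewrite !coefD !coefCM !coefXn !coefX !coefC /=; split; ring. Qed.

Lemma crit_eq (k1 c1 k2 c2 : rat) (p : {poly rat}) : k1 != 0 -> k2 != 0 ->
  k1%:P * 'X^2 + c1%:P = (k2%:P * 'X^2 + c2%:P) \Po p -> c1 = c2.
Proof.
move=> k1n0 k2n0 E.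
have sq : forall k c : rat, k != 0 -> size (k%:P * 'X^2 + c%:P) = 3%N.
  move=> k c kn0; rewrite size_polyDl size_Cmul ?size_polyXn //.
  by rewrite (leq_ltn_trans (size_polyC_leq1 _)).
have := size_comp_poly (k2%:P * 'X^2 + c2%:P) p.
rewrite -E !sq // => H.
have sp : size p = 2%N by move: H; case: (size p) => [|[|n]] /=; lia.
have pE : p = (p`_1)%:P * 'X + (p`_0)%:P.
  rewrite -[LHS]coefK poly_def sp !big_ord_recr big_ord0 /= add0r.
  by rewrite -!mul_polyC expr1 expr0 mulr1 addrC.
have a0 : p`_1 != 0.
  have : lead_coef p != 0 by rewrite lead_coef_eq0 -size_poly_eq0 sp.
  by rewrite lead_coefE sp.
move: E; rewrite comp_polyD comp_polyM !comp_polyC comp_Xn_poly pE.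
set a := p`_1; set b := p`_0.
have -> : k2%:P * (a%:P * 'X + b%:P) ^+ 2 + c2%:P =
   (k2 * a ^+ 2)%:P * 'X^2 + (2 * k2 * a * b)%:P * 'X + (k2 * b ^+ 2 + c2)%:P.
  rewrite !(rmorphD, rmorphM, rmorphXn, rmorph_nat). ring.
have -> : k1%:P * 'X^2 + c1%:P = k1%:P * 'X^2 + 0%:P * 'X + c1%:P.
  by rewrite mul0r addr0.
move=> E.
have [E0 E1] := coef_quad k1 0 c1.
have [F0 F1] := coef_quad (k2 * a ^+ 2) (2 * k2 * a * b) (k2 * b ^+ 2 + c2).
have hb : b = 0.
  move: E1; rewrite E F1 => /eqP.
  by rewrite !mulf_eq0 (negPf k2n0) (negPf a0) /= => /eqP.
move: E0; rewrite E F0 hb expr0n /= mulr0 add0r. by move=> ->. Show.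
Qed.
Fixpoint chosen (phi : nat -> rat) (pick : seq rat -> nat) (n : nat) : seq rat :=
  if n is n'.+1 then phi (pick (chosen phi pick n')) :: chosen phi pick n' else [::].

Lemma fresh_inj (phi : nat -> rat) :
  (forall L : seq rat, exists m, phi m \notin L) ->
  exists s : nat -> nat, forall i j, i <> j -> phi (s i) <> phi (s j).
Proof.
move=> H.
pose pick L := xchoose (H L).
have pickP : forall L, phi (pick L) \notin L by move=> L; exact: (xchooseP (H L)).
exists (fun n => pick (chosen phi pick n)).
have inc : forall i j, (i < j)%N -> phi (pick (chosen phi pick i)) \in chosen phi pick j.
  move=> i; elim=> [//|j IH]; rewrite ltnS leq_eqVlt => /orP [/eqP ->|/IH h].
    by rewrite /= mem_head.
  by rewrite /= in_cons h orbT.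
have main : forall i j, (i < j)%N -> phi (pick (chosen phi pick i)) <> phi (pick (chosen phi pick j)).
  move=> i j lij E; have := pickP (chosen phi pick j).
  by rewrite -E inc.
move=> i j /eqP; rewrite neq_ltn => /orP [/main //| /main h].
by move=> E; apply: h; rewrite E.
Qed.

Lemma fresh_crit (p0 p1 p2 : rat) (hB : forall t, Be p0 p1 p2 t != 0) (L : seq rat) :
  exists m : nat, - (Ae p0 p1 p2 m%:R / Be p0 p1 p2 m%:R) \notin L.
Proof.
pose Ap := Ae p0%:P p1%:P p2%:P 'X; pose Bp := Be p0%:P p1%:P p2%:P 'X.
pose F c := Ap + c%:P * Bp.
pose Rp := \prod_(c <- L) F c.
have Fev : forall c t, (F c).[t] = Ae p0 p1 p2 t + c * Be p0 p1 p2 t.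
  move=> c t; rewrite hornerD hornerM hornerC -!horner_evalE Ae_m Be_m.
  by rewrite /= ?horner_evalE !hornerC hornerX.
have Fn0 : forall c, F c != 0.
  move=> c.
  have -> : F c = Poly [:: p1 ^+ 2 - 4 * p0 * p2 - 4 * c * p0; -8 * p0 - 4 * c * p1;
                         -2 * p1 - 4 * c * p2; -4 * c; 1].
    rewrite /F /Ap /Bp /Ae /Be /= !cons_poly_def.
    rewrite !(rmorph_nat, rmorph1, rmorphXn, rmorphB, rmorphD, rmorphN, rmorphM).
    ring.
  by rewrite -size_poly_eq0 (PolyK (c:=0)) //= oner_eq0.
have Rn0 : Rp != 0.
  by rewrite prodf_seq_neq0; apply/allP => c _ /=; exact: Fn0.
case: (boolP (all (fun m : nat => root Rp m%:R) (iota 0 (size Rp)))) => [hall|].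
  pose rs := map (fun m : nat => (m%:R : rat)) (iota 0 (size Rp)).
  have Al : all (root Rp) rs by rewrite all_map.
  have U : uniq rs.
    rewrite map_inj_uniq ?iota_uniq // => a b /eqP; rewrite eqr_nat => /eqP.
    done.
  by have := max_poly_roots Rn0 Al U; rewrite size_map size_iota ltnn.
move=> /allPn [m _ hm]; exists m; apply/negP => hin.
move: hm; rewrite rootE horner_prod prodf_seq_eq0 => /negP; apply.
apply/hasP; exists (- (Ae p0 p1 p2 m%:R / Be p0 p1 p2 m%:R)) => //=.
rewrite Fev; apply/eqP; field; exact: hB.
Qed.

Section PC.
Variables (p0 p1 p2 x : rat).
Lemma Ae_C : (Ae p0 p1 p2 x)%:P = Ae p0%:P p1%:P p2%:P x%:P.
Proof. by have := @Ae_m _ _ (polyC : {rmorphism rat -> {poly rat}}) p0 p1 p2 x. Qed.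
Lemma Be_C : (Be p0 p1 p2 x)%:P = Be p0%:P p1%:P p2%:P x%:P.
Proof. by have := @Be_m _ _ (polyC : {rmorphism rat -> {poly rat}}) p0 p1 p2 x. Qed.
Lemma e1_C : (e1 p0 p1 p2 x)%:P = e1 p0%:P p1%:P p2%:P x%:P.
Proof. by have := @e1_m _ _ (polyC : {rmorphism rat -> {poly rat}}) p0 p1 p2 x. Qed.
Lemma e2_C : (e2 p0 p1 p2 x)%:P = e2 p0%:P p1%:P p2%:P x%:P.
Proof. by have := @e2_m _ _ (polyC : {rmorphism rat -> {poly rat}}) p0 p1 p2 x. Qed.
Lemma e3_C : (e3 p0 p1 p2 x)%:P = e3 p0%:P p1%:P p2%:P x%:P.
Proof. by have := @e3_m _ _ (polyC : {rmorphism rat -> {poly rat}}) p0 p1 p2 x. Qed.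
End PC.

Lemma key2 (R : comNzRingType) (p0 p1 p2 x z : R) :
  ((((0 * z + 1) * z + - e1 p0 p1 p2 x) * z + e2 p0 p1 p2 x) * z + - e3 p0 p1 p2 x) *
  ((((0 * z + 1) * z + e1 p0 p1 p2 x) * z + e2 p0 p1 p2 x) * z + e3 p0 p1 p2 x) =
  (z^+2 - Ae p0 p1 p2 x)^+3 + p2 * Be p0 p1 p2 x * (z^+2 - Ae p0 p1 p2 x)^+2
  + p1 * Be p0 p1 p2 x ^+ 2 * (z^+2 - Ae p0 p1 p2 x) + p0 * Be p0 p1 p2 x ^+ 3.
Proof. rewrite /Ae /Be /e1 /e2 /e3. ring. Qed.

Lemma gen2 (R : comNzRingType) (a k b h p0 p1 p2 : R) : k * b = 1 ->
  a * ((k * h) ^+ 3 + p2 * (k * h) ^+ 2 + p1 * (k * h) + p0) =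
  (a * k ^+ 3) * (h ^+ 3 + p2 * b * h ^+ 2 + p1 * b ^+ 2 * h + p0 * b ^+ 3).
Proof.
move=> kb.
transitivity (a * (k ^+ 3 * h ^+ 3 + p2 * (k * b) * k ^+ 2 * h ^+ 2
     + p1 * (k * b) ^+ 2 * k * h + p0 * (k * b) ^+ 3)).
  by rewrite kb; ring.
ring.
Qed.

Definition Gx (p0 p1 p2 t : rat) : {poly rat} :=
  (Be p0 p1 p2 t)^-1%:P * 'X^2 + (- (Ae p0 p1 p2 t / Be p0 p1 p2 t))%:P.

Lemma Gx_size p0 p1 p2 t : Be p0 p1 p2 t != 0 -> size (Gx p0 p1 p2 t) = 3%N.
Proof.
move=> hB; rewrite /Gx size_polyDl size_Cmul ?size_polyXn ?invr_eq0 //.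
by rewrite (leq_ltn_trans (size_polyC_leq1 _)).
Qed.

Lemma Gx_red (f : {poly rat}) (a p0 p1 p2 t : rat) :
  irreducible_poly f -> a != 0 ->
  f = a%:P * ('X^3 + p2%:P * 'X^2 + p1%:P * 'X + p0%:P) ->
  Be p0 p1 p2 t != 0 -> reducible_poly (f \Po Gx p0 p1 p2 t).
Proof.
move=> hirr a0 hf hB.
set A := Ae p0 p1 p2 t; set B := Be p0 p1 p2 t; set K := B^-1.
have KB : K * B = 1 by rewrite mulVf.
set h := 'X^2 - A%:P.
have GE : Gx p0 p1 p2 t = K%:P * h.
  by rewrite /Gx -/A -/B -/K /h polyCN polyCM -/K; ring.
have AC : A%:P = Ae p0%:P p1%:P p2%:P t%:P by rewrite /A Ae_C.
have BC : B%:P = Be p0%:P p1%:P p2%:P t%:P by rewrite /B Be_C.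
have KBP : K%:P * B%:P = 1 by rewrite -polyCM KB.
have cn0 : a * K ^+ 3 != 0 by rewrite mulf_neq0 // expf_neq0 // invr_eq0.
have hE : h = 'X^2 - A%:P by [].
rewrite GE; clearbody h; clearbody K; clearbody A B.
pose Pp := Poly [:: - e3 p0 p1 p2 t; e2 p0 p1 p2 t; - e1 p0 p1 p2 t; 1].
pose Qp := Poly [:: e3 p0 p1 p2 t; e2 p0 p1 p2 t; e1 p0 p1 p2 t; 1].
have hPQ : Pp * Qp = h^+3 + (p2 * B)%:P * h^+2 + (p1 * B^+2)%:P * h + (p0 * B^+3)%:P.
  rewrite /Pp /Qp /= !cons_poly_def !polyCN e1_C e2_C e3_C polyC1.
  rewrite !(polyCM, rmorphXn) BC hE AC.
  exact: key2.
have hcomp : f \Po (K%:P * h) = (a * K^+3)%:P * (Pp * Qp).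
  rewrite hf comp_polyM comp_polyC !comp_polyD !comp_Xn_poly !comp_polyM !comp_polyC.
  rewrite comp_polyX hPQ.
  rewrite !(polyCM, rmorphXn).
  exact: gen2.
have sP : size Pp = 4%N by rewrite (PolyK (c:=0)) //= oner_eq0.
have sQ : size Qp = 4%N by rewrite (PolyK (c:=0)) //= oner_eq0.
have Pn0 : Pp != 0 by rewrite -size_poly_eq0 sP.
have Qn0 : Qp != 0 by rewrite -size_poly_eq0 sQ.
have sc : size (f \Po (K%:P * h)) = 7%N.
  by rewrite hcomp size_Cmul // size_mul // sP sQ.
split; first by rewrite sc.
move=> [_ H].
have dv : Pp %| f \Po (K%:P * h) by rewrite hcomp dvdp_mull // dvdp_mulIl.
have s1 : size Pp != 1%N by rewrite sP.
have := eqp_size (H Pp s1 dv).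
by rewrite sP sc.
Qed.

Unset Implicit Arguments.
Theorem theorem3p2 (f : {poly rat}) :
  irreducible_poly f -> size f = 4%N ->
  exists G : nat -> {poly rat},
    (forall n, size (G n) = 3%N) /\
    (forall n, reducible_poly (f \Po G n)) /\
    (forall i j, i <> j -> forall p : {poly rat}, G i <> G j \Po p).
Proof.
move=> hirr hsize.
set a := f`_3.
have a0 : a != 0.
  have : lead_coef f != 0 by rewrite lead_coef_eq0 -size_poly_eq0 hsize.
  by rewrite lead_coefE hsize.
set p0 := f`_0 / a; set p1 := f`_1 / a; set p2 := f`_2 / a.
have e : forall y, a * (y / a) = y by move=> y; rewrite mulrC divfK.
have hf : f = a%:P * ('X^3 + p2%:P * 'X^2 + p1%:P * 'X + p0%:P).
  have -> : a%:P * ('X^3 + p2%:P * 'X^2 + p1%:P * 'X + p0%:P) =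
     a%:P * 'X^3 + (a * p2)%:P * 'X^2 + (a * p1)%:P * 'X + (a * p0)%:P.
    by rewrite !polyCM; ring.
  rewrite /p0 /p1 /p2 !e.
  rewrite -{1}[f]coefK poly_def hsize !big_ord_recr big_ord0 /= add0r.
  rewrite -!mul_polyC expr0 mulr1 expr1 /a.
  ring.
have nr : forall t, Be p0 p1 p2 t != 0.
  move=> t; rewrite /Be mulf_neq0 //; apply/negP => /eqP ht.
  have rt : root f t.
    by rewrite rootE hf hornerM hornerC !hornerD !hornerXn !hornerM !hornerC hornerX ht mulr0.
  have s1 : size ('X - t%:P) != 1%N by rewrite size_XsubC.
  have d1 : ('X - t%:P) %| f by rewrite dvdp_XsubCl.
  have := eqp_size (hirr.2 ('X - t%:P) s1 d1).
  by rewrite size_XsubC hsize.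
pose phi (m : nat) := - (Ae p0 p1 p2 m%:R / Be p0 p1 p2 m%:R).
have [s hs] := fresh_inj (fresh_crit nr).
exists (fun n => Gx p0 p1 p2 (s n)%:R); split; [|split].
- by move=> n; rewrite Gx_size.
- by move=> n; apply: (Gx_red hirr a0 hf (nr _)).
move=> i j hij p E; apply: (hs i j hij).
move: E; rewrite /Gx => /crit_eq; apply; by rewrite invr_eq0.
Qed.
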